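(* Let $N$ be a positive integer, $l\in\{2,\ldots,\frac{N}{2}\}$, and let $\Gamma$ be the $l$-hypercycle on $N$ vertices. Then the eigenvalues of its (signless) normalized Laplacian are $$\lambda_i=1+\frac{\sum_{r=1}^N m(r)\cos\left(\frac{2\pi i r}{N}\right)}{l},\qquad i=1,\ldots,N,$$ where $m:\{0,\ldots,N\}\to\mathbb{Z}$ is defined by $m(r):=l-r$ for $r\in\{1,\ldots,l-1\}$, $m(N-k):=l-k$ for $k\in\{1,\ldots,l-1\}$, and $m:=0$ otherwise.
   Context: A hypergraph $\Gamma=(\mathcal{V},\mathcal{H})$ has a finite vertex set $\mathcal{V}$ and a set $\mathcal{H}$ of nonempty subsets of $\mathcal{V}$ (hyperedges). $\deg(v)$ is the number of hyperedges containing $v$, $D$ the diagonal degree matrix, $A$ the matrix with $A_{ii}=0$ and $A_{ij}=-\#\{h\in\mathcal{H}: v_i,v_j\in h\}$ for $i\ne j$, and the (signless) normalized Laplacian is $L=\mathrm{Id}-D^{-1}A$. The $l$-hypercycle on $N$ vertices has $\mathcal{V}=\{v_1,\ldots,v_N\}$ and $\mathcal{H}=\{h_1,\ldots,h_N\}$ with $h_i=\{v_i,v_{i+1},\ldots,v_{i+l-1}\}$, indices taken modulo $N$ (i.e. $v_{N+i}:=v_i$). Here the eigenvalues $\lambda_i$ are indexed by the formula, not in increasing order. *)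

(* Defs.v *)
From HB Require Import structures.
From mathcomp Require Import all_boot all_order all_algebra.
From mathcomp Require Import all_classical all_reals all_analysis.
Set Implicit Arguments. Unset Strict Implicit. Unset Printing Implicit Defensive.
Import Order.TTheory GRing.Theory Num.Theory.
Local Open Scope ring_scope.

Section Hypergraph.
Variables (R : realType) (V : finType) (H : {set {set V}}).

Definition hdeg (v : V) : nat := #|[set h in H | v \in h]|.

Definition hadj : 'M[R]_#|V| :=
  \matrix_(i, j) (if i == j then 0
                  else - (#|[set h in H | (enum_val i \in h) && (enum_val j \in h)]|)%:R).

Definition hdegmx : 'M[R]_#|V| := \matrix_(i, j) ((i == j)%:R * (hdeg (enum_val i))%:R).

Definition hlap : 'M[R]_#|V| := 1%:M - invmx hdegmx *m hadj.
End Hypergraph.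

(* The l-hypercycle on N vertices v_0..v_{N-1} (0-based indices mod N):
   h_i = {v_i, v_{i+1}, ..., v_{i+l-1}} *)
Definition hyperedge (N l : nat) (i : 'I_N) : {set 'I_N} :=
  [set v : 'I_N | ((v + N - i) %% N < l)%N].

Definition hypercycle (N l : nat) : {set {set 'I_N}} :=
  [set hyperedge l i | i : 'I_N].

Definition mfun (N l r : nat) : int :=
  if (1 <= r <= l - 1)%N then (l%:Z - r%:Z)
  else if (N - (l - 1) <= r <= N - 1)%N then (l%:Z - (N - r)%:Z)
  else 0.

Definition hc_eig (R : realType) (N l i : nat) : R :=
  1 + (\sum_(1 <= r < N.+1) (mfun N l r)%:~R * cos (2 * pi * i%:R * r%:R / N%:R)) / l%:R.

(* Main.v *)
Require Import Defs.
From HB Require Import structures.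
From mathcomp Require Import all_boot all_order all_algebra.
From mathcomp Require Import all_classical all_reals all_analysis.
From mathcomp Require Import complex ring lra zify.
Import Order.TTheory GRing.Theory Num.Theory.

Local Open Scope nat_scope.

Lemma modN2' N x : (0 < N)%N ->
  (x %% N = x /\ x < N) \/ (x %% N = x - N /\ N <= x < 2 * N) \/ (2 * N <= x).
Proof.
move=> N0; case: (ltnP x N) => h1; first by left; rewrite modn_small.
right; case: (ltnP x (2 * N)) => h2; last by right.
left; split; last by apply/andP.
have {1}-> : x = (x - N) + N by rewrite subnK.
by rewrite modnDr modn_small // ltn_subLR // addnn -mul2n.
Qed.

Ltac mod_elim N0 :=
  repeat match goal with
  | |- context[(?x %% ?N)%N] =>
      lazymatch x with context[(_ %% _)%N] => fail | _ =>
      let E := fresh "E" in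
      have E := @modN2' N x N0;
      case: E => [[-> ?]|[[-> ?]|?]]; [ | | exfalso; lia]
      end
  end.

Lemma count_int lo hi n :
  \sum_(0 <= t < n) (if (lo <= t < hi) then 1 else 0) = minn hi n - minn lo n.
Proof.
elim: n => [|n IH]; first by rewrite big_geq //; lia.
rewrite big_nat_recr //= IH; case: ifP; lia.
Qed.

Definition mnat (N l d : nat) : nat :=
  if (1 <= d <= l - 1) then l - d
  else if (N - (l - 1) <= d <= N - 1) then l - (N - d)
  else 0.

Lemma inv_mod N a t : 0 < N -> a < N -> t < N -> (a + N - (a + N - t) %% N) %% N = t.
Proof. move=> N0 aN tN; mod_elim N0; lia. Qed.

Lemma shift_mod N a b t : 0 < N -> a < N -> b < N -> t < N ->
  (b + N - (a + N - t) %% N) %% N = (t + (b + N - a) %% N) %% N.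
Proof. move=> N0 aN bN tN; mod_elim N0; lia. Qed.

Lemma shift2 N a b i : 0 < N -> a < N -> b < N -> i < N ->
  (b + N - i) %% N = ((a + N - i) %% N + (b + N - a) %% N) %% N.
Proof. move=> N0 aN bN iN; mod_elim N0; lia. Qed.

Lemma pred_case N l d t : 0 < N -> 2 <= l -> 2 * l <= N -> 0 < d < N -> t < N ->
  (t < l) && ((t + d) %% N < l)
   = if (1 <= d <= l - 1) then (0 <= t < l - d) else if (N - (l - 1) <= d <= N - 1) then (N - d <= t < l) else (0 <= t < 0).
Proof.
move=> N0 l2 lN dN tN.
case: ifP => ?; [|case: ifP => ?]; mod_elim N0; apply/idP/idP; lia.
Qed.

Lemma card_set_sum (N : nat) (P : pred 'I_N) :
  #|[set i | P i]| = \sum_(i < N) (if P i then 1 else 0).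
Proof. by rewrite -sum1_card big_mkcond /=; apply: eq_bigr => i _; rewrite inE. Qed.

Lemma reindex_mod N (N0 : 0 < N) (a : 'I_N) (F : nat -> nat) :
  \sum_(i < N) F ((a + N - i) %% N) = \sum_(t < N) F t.
Proof.
pose h := fun t : 'I_N => Ordinal (ltn_pmod (a + N - t) N0).
have hinj : injective h.
  move=> t t' /(congr1 (fun x : 'I_N => (a + N - x) %% N)).
  by rewrite /= !inv_mod // => /val_inj.
rewrite (reindex_inj hinj) /=.
by apply: eq_bigr => t _; rewrite inv_mod.
Qed.

Lemma card_single N l (a : 'I_N) : 0 < N -> l <= N ->
  #|[set i : 'I_N | (a + N - i) %% N < l]| = l.
Proof.
move=> N0 lN; rewrite card_set_sum.
rewrite (@reindex_mod _ N0 a (fun x => if x < l then 1 else 0)).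
rewrite -(big_mkord (fun _ => true) (fun x => if x < l then 1 else 0)).
rewrite (eq_bigr (fun t => if (0 <= t < l) then 1 else 0)) ?count_int //; lia.
Qed.

Lemma card_pair N l (a b : 'I_N) : 0 < N -> 2 <= l -> 2 * l <= N -> a != b ->
  #|[set i : 'I_N | ((a + N - i) %% N < l) && ((b + N - i) %% N < l)]|
  = mnat N l ((b + N - a) %% N).
Proof.
move=> N0 l2 lN ab; rewrite card_set_sum.
have aN := ltn_ord a; have bN := ltn_ord b.
set d := (b + N - a) %% N.
have dN : 0 < d < N.
  rewrite /d ltn_pmod // andbT; move: ab; rewrite -val_eqE /=; mod_elim N0; lia.
under eq_bigr => i _ do rewrite (@shift2 N a b i) // -/d.
rewrite (@reindex_mod _ N0 a (fun x => if (x < l) && ((x + d) %% N < l) then 1 else 0)).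
under eq_bigr => t _ do rewrite pred_case //.
rewrite -(big_mkord (fun _ => true) (fun t => if (if (1 <= d <= l - 1) then (0 <= t < l - d) else if (N - (l - 1) <= d <= N - 1) then (N - d <= t < l) else (0 <= t < 0)) then 1 else 0)).
rewrite /mnat; case h1: (1 <= d <= l - 1); [|case h2: (N - (l - 1) <= d <= N - 1)].
- by rewrite (count_int 0 (l - d) N); lia.
- by rewrite (count_int (N - d) l N); lia.
- by rewrite (count_int 0 0 N); lia.
Qed.


Local Open Scope ring_scope.

Lemma charpoly_eig (F : fieldType) n (A V : 'M[F]_n) (mu : 'rV[F]_n) :
  \det V != 0 -> A *m V = V *m diag_mx mu ->
  char_poly A = \prod_i ('X - (mu 0 i)%:P).
Proof.
move=> dV AV.
have E : char_poly_mx A *m map_mx polyC V = map_mx polyC V *m char_poly_mx (diag_mx mu).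
  rewrite /char_poly_mx mulmxBl mulmxBr -map_mxM AV map_mxM.
  by rewrite mul_scalar_mx mul_mx_scalar.
have := congr1 determinant E.
rewrite !det_mulmx det_map_mx mulrC.
have dV' : (\det V)%:P != 0 by rewrite polyC_eq0.
move=> /(mulfI dV'); rewrite /char_poly => ->.
rewrite -/(char_poly _) char_poly_trig ?diag_mx_is_trig //.
by apply: eq_bigr => i _; rewrite mxE eqxx mulr1n.
Qed.

Local Open Scope complex_scope.

Section Om.
Variables (R : realType) (N : nat).
Hypothesis N0 : (0 < N)%N.

Definition ang (k : nat) : R := 2 * pi * k%:R / N%:R.
Definition om (k : nat) : R[i] := cos (ang k) +i* sin (ang k).

Lemma angD a b : ang (a + b) = ang a + ang b.
Proof. by rewrite /ang natrD mulrDr mulrDl. Qed.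

Lemma omD a b : om (a + b) = om a * om b.
Proof.
rewrite /om angD; move: (ang a) (ang b) => x y.
by apply/eqP; rewrite eq_complex /= cosD sinD eqxx [X in _ == X]addrC eqxx.
Qed.

Lemma om0 : om 0 = 1.
Proof. by rewrite /om /ang mulr0 mul0r cos0 sin0. Qed.

Lemma omN : om N = 1.
Proof.
rewrite /om; have -> : ang N = pi *+ 2.
  by rewrite /ang mulfK ?pnatr_eq0 -?lt0n // mulr_natl mulr2n.
by rewrite cos2pi sin2pi.
Qed.

Lemma omM a b : om (a * b) = om a ^+ b.
Proof.
elim: b => [|b IH]; first by rewrite muln0 om0.
by rewrite mulnS omD IH exprS.
Qed.

Lemma om_mod a : om (a %% N) = om a.
Proof.
by rewrite {2}(divn_eq a N) omD mulnC omM omN expr1n mul1r.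
Qed.

Lemma om_ne1 m : (0 < m < N)%N -> om m != 1.
Proof.
move=> /andP[m0 mN].
have h : cos (ang m) < 1.
  have -> : ang m = (pi * m%:R / N%:R) *+ 2.
    by rewrite /ang; ring.
  rewrite cos_mulr2n cos2sin2.
  have s0 : (0 : R) < sin (pi * m%:R / N%:R).
    apply: sin_gt0_pi; apply/andP; split.
      by rewrite divr_gt0 ?mulr_gt0 ?pi_gt0 ?ltr0n.
    rewrite ltr_pdivrMr ?ltr0n // ltr_pM2l ?pi_gt0 ?ltr_nat //.
  have s2 : (0:R) < sin (pi * m%:R / N%:R) ^+ 2 by rewrite exprn_gt0.
  lra.
apply/negP => /eqP E; move: h; rewrite /om in E.
by case: E => ->; rewrite ltxx.
Qed.

End Om.

Lemma hyperedge_inj N l : (0 < N)%N -> (2 <= l)%N -> (2 * l <= N)%N ->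
  injective (@hyperedge N l).
Proof.
move=> N0 l2 lN i j E.
have iN := ltn_ord i; have jN := ltn_ord j.
have hi : i \in hyperedge l j by rewrite -E inE; mod_elim N0; lia.
have hj : j \in hyperedge l i by rewrite E inE; mod_elim N0; lia.
move: hi hj; rewrite !inE => hi hj; apply/val_inj => /=.
move: hi hj; mod_elim N0; lia.
Qed.

Lemma card_hc N l (P : pred {set 'I_N}) : (0 < N)%N -> (2 <= l)%N -> (2 * l <= N)%N ->
  #|[set h in hypercycle N l | P h]| = #|[set i : 'I_N | P (hyperedge l i)]|.
Proof.
move=> N0 l2 lN.
have -> : [set h in hypercycle N l | P h] = hyperedge l @: [set i : 'I_N | P (hyperedge l i)].
  apply/setP => h; rewrite !inE; apply/andP/imsetP.
    by case=> /imsetP[i _ ->] Ph; exists i; rewrite ?inE.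
  by case=> i; rewrite inE => Pi ->; split => //; apply/imsetP; exists i.
by rewrite card_imset //; apply: hyperedge_inj.
Qed.

Lemma hlapE (R : realType) N l (k m : 'I_#|'I_N|) :
  (0 < N)%N -> (2 <= l)%N -> (2 * l <= N)%N ->
  hlap R (hypercycle N l) k m =
  (k == m)%:R + (mnat N l ((m + N - k) %% N))%:R / l%:R.
Proof.
move=> N0 l2 lN.
have vE (x : 'I_#|'I_N|) : nat_of_ord (enum_val x) = nat_of_ord x by rewrite enum_val_ord.
have Dl : hdegmx R (hypercycle N l) = (l%:R)%:M.
  apply/matrixP => i j; rewrite !mxE /hdeg card_hc //.
  have -> : [set x : 'I_N | enum_val i \in hyperedge l x] = [set x : 'I_N | ((enum_val i + N - x) %% N < l)%N].
    by apply/setP => x; rewrite !inE.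
  rewrite card_single //; last by lia.
  by rewrite mulr_natl.
rewrite /hlap Dl invmx_scalar mul_scalar_mx !mxE.
have km : (k == m) = (enum_val k == enum_val m).
  by apply/eqP/eqP => [->//|/enum_val_inj].
case: eqP => [<-|/eqP nkm].
  have m0 : mnat N l 0 = 0%N.
    rewrite /mnat /=; have -> : (N - (l - 1) <= 0)%N = false by apply/negbTE; lia.
    done.
  by rewrite addKn modnn m0 mulr0 subr0 mul0r addr0.
rewrite (@card_hc N l (fun h => (enum_val k \in h) && (enum_val m \in h))) //.
have -> : [set x : 'I_N | (enum_val k \in hyperedge l x) && (enum_val m \in hyperedge l x)]
   = [set x : 'I_N | ((enum_val k + N - x) %% N < l)%N && ((enum_val m + N - x) %% N < l)%N].
  by apply/setP => x; rewrite !inE.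
rewrite card_pair //; last by rewrite -km.
rewrite !vE sub0r mulrN opprK add0r mulrC //.
Qed.

Section Eig.
Variables (R : realType) (N l : nat).
Hypotheses (N0 : (0 < N)%N) (l2 : (2 <= l)%N) (lN : (2 * l <= N)%N).
Local Notation om := (om R N).
Local Notation ang := (ang R N).

Lemma om_modM J x : om (J * (x %% N)) = om (J * x).
Proof. by rewrite -(@om_mod R N N0) modnMmr (@om_mod R N N0). Qed.

Lemma om_conj x y : om x * om y = 1 -> om x + om y = (cos (ang x) *+ 2)%:C.
Proof.
move=> h.
have cs := cos2Dsin2 (ang x).
have hz : om x * (cos (ang x) -i* sin (ang x)) = 1.
  apply/eqP; rewrite eq_complex /=; apply/andP; split; apply/eqP; nra.
have hy : om y = cos (ang x) -i* sin (ang x).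
  transitivity (om y * (om x * (cos (ang x) -i* sin (ang x)))); first by rewrite hz mulr1.
  by rewrite mulrA [om y * om x]mulrC h mul1r.
rewrite hy /om; apply/eqP; rewrite eq_complex /=; apply/andP; split; apply/eqP.
  by rewrite mulr2n.
by rewrite subrr.
Qed.

Lemma mnat_sym r : (r < N)%N -> mnat N l ((N - r) %% N) = mnat N l r.
Proof.
move=> rN; rewrite /mnat.
mod_elim N0.
all: case: ifP => ?; [|case: ifP => ?]; case: ifP => ?; try case: ifP => ?; lia.
Qed.

End Eig.

Lemma half_eq (F : numDomainType) (x y : F) : x *+ 2 = y *+ 2 -> x = y.
Proof. by move=> /eqP; rewrite -subr_eq0 -mulrnBl mulrn_eq0 /= subr_eq0 => /eqP. Qed.

Section Eig2.
Variables (R : realType) (N l : nat).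
Hypotheses (N0 : (0 < N)%N) (l2 : (2 <= l)%N) (lN : (2 * l <= N)%N).
Local Notation om := (om R N).
Local Notation ang := (ang R N).

Lemma inv_sub r : (r < N)%N -> ((N - (N - r) %% N) %% N = r)%N.
Proof. by move=> rN; mod_elim N0; lia. Qed.

Lemma sum_sub0 r : (r < N)%N -> ((r + (N - r) %% N) %% N = 0)%N.
Proof. by move=> rN; mod_elim N0; lia. Qed.

Lemma sym_sum J :
  \sum_(r < N) ((mnat N l r)%:R : R)%:C * om (J * r) =
  (\sum_(r < N) (mnat N l r)%:R * cos (ang (J * r)))%:C.
Proof.
set S := LHS.
have S' : S = \sum_(r < N) ((mnat N l r)%:R : R)%:C * om (J * ((N - r) %% N)).
  pose h := fun r : 'I_N => Ordinal (ltn_pmod (N - r) N0).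
  have hinj : injective h.
    move=> t t' /(congr1 (fun x : 'I_N => (N - x) %% N)%N).
    by rewrite /= !inv_sub // => /val_inj.
  rewrite /S (reindex_inj hinj) /=.
  apply: eq_bigr => r _; rewrite mnat_sym //.
have E2 : S *+ 2 = (\sum_(r < N) (mnat N l r)%:R * cos (ang (J * r)))%:C *+ 2.
  rewrite mulr2n {1}S' /S -big_split /= -rmorphMn -sumrMnl rmorph_sum.
  apply: eq_bigr => r _.
  rewrite -mulrDr addrC om_conj; last first.
    by rewrite -omD -mulnDr -(@om_modM R N N0 J (r + _)) sum_sub0 // muln0 om0.
  by rewrite -(rmorphM (real_complex R)) mulrnAr.
exact: half_eq E2.
Qed.


Lemma mfun_mnat r : Defs.mfun N l r = (mnat N l r)%:Z.
Proof. rewrite /Defs.mfun /mnat; case: ifP => ?; [|case: ifP => ?]; lia. Qed.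

Lemma mnatN : mnat N l N = 0%N.
Proof. rewrite /mnat; repeat (case: ifP => ?); lia. Qed.

Lemma mnat0 : mnat N l 0 = 0%N.
Proof. rewrite /mnat; repeat (case: ifP => ?); lia. Qed.

Lemma hc_sum J :
  \sum_(1 <= r < N.+1) (Defs.mfun N l r)%:~R * cos (2 * pi * J%:R * r%:R / N%:R)
  = \sum_(r < N) ((mnat N l r)%:R : R) * cos (ang (J * r)).
Proof.
rewrite big_nat_recr //= mfun_mnat mnatN mul0r addr0.
rewrite -(big_mkord (fun _ => true) (fun r => ((mnat N l r)%:R : R) * cos (ang (J * r)))).
rewrite (big_ltn N0) mnat0 mul0r add0r.
apply: eq_big_nat => r _.
by rewrite mfun_mnat /ang natrM !mulrA.
Qed.

Lemma eig_sum J k : (k < N)%N ->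
  \sum_(m < N) ((((k == m :> nat)%:R + (mnat N l ((m + N - k) %% N))%:R / l%:R) : R)%:C * om (J * m))
  = om (J * k) * (hc_eig R N l J)%:C.
Proof.
move=> kN.
under eq_bigr => m _ do rewrite (rmorphD (real_complex R)) mulrDl.
rewrite big_split /=.
rewrite (bigD1 (Ordinal kN)) //= eqxx big1 ?addr0; last first.
  move=> m /eqP nm; suff -> : (k == m :> nat) = false by rewrite mul0r.
  by apply/negbTE/eqP => km; apply: nm; apply: val_inj.
pose h := fun r : 'I_N => Ordinal (ltn_pmod (r + k) N0).
have hinj : injective h.
  move=> t t' /(congr1 (fun x : 'I_N => nat_of_ord x)) /=.
  have tN := ltn_ord t; have tN' := ltn_ord t'; mod_elim N0 => ?; apply: val_inj => /=; lia.
rewrite (reindex_inj hinj) /=.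
have hk (r : 'I_N) : (((r + k) %% N + N - k) %% N)%N = r.
  have rN := ltn_ord r; mod_elim N0; lia.
under eq_bigr => r _ do rewrite hk (@om_modM R N N0) mulnDr omD mulrA.
rewrite -mulr_suml -mulrDl mulrC; congr (_ * _).
rewrite /hc_eig hc_sum (rmorphD (real_complex R)); congr (_ + _).
rewrite (rmorphM (real_complex R)).
transitivity ((\sum_(r < N) ((mnat N l r)%:R : R)%:C * om (J * r)) * (l%:R^-1 : R)%:C); last first.
  by congr (_ * _); exact: sym_sum.
rewrite mulr_suml; apply: eq_bigr => r _.
by rewrite (rmorphM (real_complex R)) mulrAC.
Qed.

End Eig2.

Lemma om_neq0 (R : realType) N a : om R N a != 0.
Proof.
apply/eqP => h; have := cos2Dsin2 (ang R N a); move: h; rewrite /om.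
by case=> -> ->; rewrite expr0n /= addr0 => /eqP; rewrite eq_sym oner_eq0.
Qed.

Lemma om_neq (R : realType) N (N0 : (0 < N)%N) a b : (a < b)%N -> (b - a < N)%N ->
  om R N b != om R N a.
Proof.
move=> ab baN; apply/negP => /eqP E.
have : om R N (b - a) == 1.
  have E2 : om R N a * om R N (b - a) = om R N a * 1.
    by rewrite -omD subnKC ?mulr1 //; apply: ltnW.
  by rewrite (mulfI (om_neq0 R N a) E2).
by apply/negP; apply: om_ne1 => //; rewrite subn_gt0 ab.
Qed.

Lemma big_cast (T : Type) (idx : T) (op : Monoid.com_law idx) (G : nat -> T) n N :
  n = N -> \big[op/idx]_(i < n) G i = \big[op/idx]_(i < N) G i.
Proof. by move->. Qed.

Local Close Scope complex_scope.

Theorem mainTheorem10 (R : realType) (N l : nat) :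
  (0 < N)%N -> (2 <= l)%N -> (2 * l <= N)%N ->
  char_poly (hlap R (hypercycle N l)) =
  \prod_(i < N) ('X - (hc_eig R N l i.+1)%:P).
Proof.
move=> N0 l2 lN.
have cN : #|'I_N| = N := card_ord N.
apply: (@map_poly_inj _ _ (real_complex R)).
rewrite map_char_poly.
have -> : map_poly (real_complex R) (\prod_(i < N) ('X - (hc_eig R N l i.+1)%:P)) =
    \prod_(i < N) ('X - (real_complex R (hc_eig R N l i.+1))%:P).
  by rewrite rmorph_prod; apply: eq_bigr => i _; exact: map_polyXsubC.
pose V := Vandermonde #|'I_N| (\row_(j < #|'I_N|) om R N j.+1).
pose mu := \row_(j < #|'I_N|) (real_complex R (hc_eig R N l j.+1)).
rewrite (@charpoly_eig _ _ _ V mu).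
- under eq_bigr => i _ do rewrite mxE.
  exact: (@big_cast _ _ _ (fun i => 'X - (real_complex R (hc_eig R N l i.+1))%:P) _ _ cN).
- rewrite det_Vandermonde; apply/prodf_neq0 => i _; apply/prodf_neq0 => j ij.
  rewrite !mxE subr_eq0; apply: om_neq => //.
  have jN : (j < N)%N by apply: leq_trans (ltn_ord j) _; rewrite cN.
  lia.
- apply/matrixP => k j; rewrite mul_mx_diag !mxE.
  have kN : (k < N)%N by apply: leq_trans (ltn_ord k) _; rewrite cN.
  rewrite -omM -(@eig_sum R N l N0 l2 lN) //.
  under eq_bigr => m _ do rewrite mxE hlapE // !mxE -omM.
  exact: (@big_cast _ _ _ (fun m => (real_complex R (((k == m :> nat)%:R + (mnat N l ((m + N - k) %% N))%:R / l%:R) : R) * om R N (j.+1 * m))%R) _ _ cN).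
Qed.
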